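(* Let $H=(v_1,\dots,v_6)$ be an embedded equilateral hexagon, considered up to translations and rotations, whose action-angle coordinates $(d_1,d_2,d_3,\theta_1,\theta_2,\theta_3)$ for the $T_{135}$ triangulation are defined. If $J(H)=(1,1)$, then $\theta_i\in(0,\pi)$ for all $i\in\{1,2,3\}$, and $\theta_1+\theta_2<\pi$, $\theta_1+\theta_3<\pi$, $\theta_2+\theta_3<\pi$.
   Context: An equilateral hexagon is an ordered 6-tuple $H=(v_1,\dots,v_6)$ in $\mathbb{R}^3$ with $\|v_i-v_{i+1}\|=1$ (indices mod 6), edges $e_i=[v_i,v_{i+1}]$, oriented $v_1\to v_2\to\cdots\to v_6\to v_1$; embedded means non-adjacent edges are disjoint and adjacent ones meet only at their common endpoint. Standard position: $v_1=0$, $v_3$ on the positive $x$-axis, $v_5$ in the $xy$-plane with positive $y$-coordinate. Action-angle coordinates ($T_{135}$ triangulation), defined when $v_1,v_3,v_5$ are not collinear and $0<d_i<2$: $d_1=\|v_3-v_1\|$, $d_2=\|v_5-v_3\|$, $d_3=\|v_1-v_5\|$; with $m_1,m_2,m_3$ the midpoints of $[v_1,v_3],[v_3,v_5],[v_5,v_1]$, $u_1,u_2,u_3$ the unit vectors in the $xy$-plane perpendicular to these segments pointing toward the opposite vertex of triangle $v_1v_3v_5$ (toward $v_5,v_1,v_3$ respectively), and $e_z=(0,0,1)$, the angles $\theta_i\in[0,2\pi)$ are determined by $v_{2i}=m_i+\tfrac12\sqrt{4-d_i^2}(\cos\theta_i\,u_i+\sin\theta_i\,e_z)$ (regular planar hexagon: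 all $\theta_i=\pi$). Joint Chirality-Curl: $curl(H)=\operatorname{sign}\big((v_3-v_1)\times(v_5-v_1)\cdot(v_2-v_1)\big)$. For $i=2,4,6$, $T_i$ is the open triangular disk with vertices $v_{i-1},v_i,v_{i+1}$, oriented by the right-hand rule (normal $(v_i-v_{i-1})\times(v_{i+1}-v_i)$), and $\Delta_i$ is the algebraic intersection number of $T_i$ with the oriented polygon $H$. Then $J(H)=(\Delta_2\Delta_4\Delta_6,\ \Delta_2^2\Delta_4^2\Delta_6^2\,curl(H))$. *)

(* Defs.v *)
From Stdlib Require Import Reals Lra ZArith ClassicalEpsilon.
Open Scope R_scope.

Record vec3 : Type := V3 { vx : R; vy : R; vz : R }.

Definition vadd (a b : vec3) : vec3 := V3 (vx a + vx b) (vy a + vy b) (vz a + vz b).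
Definition vsub (a b : vec3) : vec3 := V3 (vx a - vx b) (vy a - vy b) (vz a - vz b).
Definition vscale (k : R) (a : vec3) : vec3 := V3 (k * vx a) (k * vy a) (k * vz a).
Definition dot (a b : vec3) : R := vx a * vx b + vy a * vy b + vz a * vz b.
Definition cross (a b : vec3) : vec3 :=
  V3 (vy a * vz b - vz a * vy b) (vz a * vx b - vx a * vz b) (vx a * vy b - vy a * vx b).
Definition vnorm (a : vec3) : R := sqrt (dot a a).
Definition dist (a b : vec3) : R := vnorm (vsub a b).
Definition origin : vec3 := V3 0 0 0.
Definition e_z : vec3 := V3 0 0 1.
Definition midpoint (a b : vec3) : vec3 := vscale (1/2) (vadd a b).

Definition on_segment (p a b : vec3) : Prop :=
  exists t, 0 <= t <= 1 /\ p = vadd a (vscale t (vsub b a)).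

Definition in_open_triangle (p a b c : vec3) : Prop :=
  exists al be ga, 0 < al /\ 0 < be /\ 0 < ga /\ al + be + ga = 1 /\
    p = vadd (vscale al a) (vadd (vscale be b) (vscale ga c)).

Record hexagon : Type := Hex { h1 : vec3; h2 : vec3; h3 : vec3; h4 : vec3; h5 : vec3; h6 : vec3 }.

Definition vtx (H : hexagon) (i : nat) : vec3 :=
  match (i mod 6)%nat with
  | 1%nat => h1 H | 2%nat => h2 H | 3%nat => h3 H
  | 4%nat => h4 H | 5%nat => h5 H | _ => h6 H
  end.

Definition on_edge (H : hexagon) (i : nat) (p : vec3) : Prop :=
  on_segment p (vtx H i) (vtx H (S i)).

Definition equilateral (H : hexagon) : Prop :=
  forall i : nat, (1 <= i <= 6)%nat -> dist (vtx H i) (vtx H (S i)) = 1.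

Definition embedded (H : hexagon) : Prop :=
  (forall i j : nat, (1 <= i <= 6)%nat -> (1 <= j <= 6)%nat -> i <> j ->
      (j mod 6 <> S i mod 6)%nat -> (i mod 6 <> S j mod 6)%nat ->
      forall p, ~ (on_edge H i p /\ on_edge H j p)) /\
  (forall i : nat, (1 <= i <= 6)%nat ->
      forall p, on_edge H i p -> on_edge H (S i) p -> p = vtx H (S i)).

Definition Rsign (x : R) : Z :=
  if Rlt_dec 0 x then 1%Z else if Rlt_dec x 0 then (-1)%Z else 0%Z.

Definition curl (H : hexagon) : Z :=
  let v1 := vtx H 1 in
  Rsign (dot (cross (vsub (vtx H 3) v1) (vsub (vtx H 5) v1)) (vsub (vtx H 2) v1)).

(** Contribution of the oriented edge [a -> b] to the algebraic intersection
    number with the open triangle T = (p,q,r), oriented by the normal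
    N = (q - p) x (r - q).  With f(x) = (x - q).N the signed height, the edge
    contributes +1 if it goes from f<0 to f>=0 and -1 if from f>=0 to f<0,
    provided the point where it meets the plane of T lies in the open disk T.
    (Half-open convention: it agrees with the count of transverse crossings in
    general position, and counts a vertex of H lying in T correctly.) *)
Definition edge_contrib (a b p q r : vec3) : Z :=
  let N := cross (vsub q p) (vsub r q) in
  let fa := dot (vsub a q) N in
  let fb := dot (vsub b q) N in
  let x := vadd a (vscale (fa / (fa - fb)) (vsub b a)) in
  if excluded_middle_informative (in_open_triangle x p q r) then
    (if Rlt_dec fa 0 then (if Rle_dec 0 fb then 1%Z else 0%Z)
     else (if Rlt_dec fb 0 then (-1)%Z else 0%Z))
  else 0%Z.

(** Delta_i: algebraic intersection number of T_i = (v_{i-1}, v_i, v_{i+1})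
    with the oriented polygon H (sum over its six oriented edges). *)
Definition Delta (H : hexagon) (i : nat) : Z :=
  let p := vtx H (i + 5) in
  let q := vtx H i in
  let r := vtx H (S i) in
  (edge_contrib (vtx H 1) (vtx H 2) p q r + edge_contrib (vtx H 2) (vtx H 3) p q r +
   edge_contrib (vtx H 3) (vtx H 4) p q r + edge_contrib (vtx H 4) (vtx H 5) p q r +
   edge_contrib (vtx H 5) (vtx H 6) p q r + edge_contrib (vtx H 6) (vtx H 1) p q r)%Z.

Definition J (H : hexagon) : Z * Z :=
  ((Delta H 2 * Delta H 4 * Delta H 6)%Z,
   (Delta H 2 ^ 2 * Delta H 4 ^ 2 * Delta H 6 ^ 2 * curl H)%Z).

Definition standard_position (H : hexagon) : Prop :=
  vtx H 1 = origin /\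
  0 < vx (vtx H 3) /\ vy (vtx H 3) = 0 /\ vz (vtx H 3) = 0 /\
  vz (vtx H 5) = 0 /\ 0 < vy (vtx H 5).

Definition diag (H : hexagon) (i : nat) : R :=
  dist (vtx H (2 * i + 1)) (vtx H (2 * i - 1)).

Definition perp_toward (a b o : vec3) : vec3 :=
  let w := V3 (- (vy b - vy a)) (vx b - vx a) 0 in
  let s := if Rlt_dec 0 (dot w (vsub o (midpoint a b))) then 1 else -1 in
  vscale (s / vnorm w) w.

Definition mid_i (H : hexagon) (i : nat) : vec3 :=
  midpoint (vtx H (2 * i - 1)) (vtx H (2 * i + 1)).
Definition u_i (H : hexagon) (i : nat) : vec3 :=
  perp_toward (vtx H (2 * i - 1)) (vtx H (2 * i + 1)) (vtx H (2 * i + 3)).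

Definition aa_defined (H : hexagon) : Prop :=
  cross (vsub (vtx H 3) (vtx H 1)) (vsub (vtx H 5) (vtx H 1)) <> origin /\
  (forall i : nat, (1 <= i <= 3)%nat -> 0 < diag H i < 2).

Definition is_angle (H : hexagon) (i : nat) (theta : R) : Prop :=
  0 <= theta < 2 * PI /\
  vtx H (2 * i) =
    vadd (mid_i H i)
      (vscale (/2 * sqrt (4 - diag H i ^ 2))
         (vadd (vscale (cos theta) (u_i H i)) (vscale (sin theta) e_z))).

(* Main.v *)
Require Import Defs.
From Stdlib Require Import Reals ZArith.
From Stdlib Require Import Lra Lia Psatz ClassicalEpsilon.
Import Defs.
Open Scope R_scope.


Definition fval (a p q r : vec3) : R := dot (vsub a q) (cross (vsub q p) (vsub r q)).
Definition ind (P : Prop) : Z := if excluded_middle_informative P then 1%Z else 0%Z.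

Lemma ec_nz a b p q r : edge_contrib a b p q r <> 0%Z ->
  exists l, 0 <= l <= 1 /\ in_open_triangle (vadd a (vscale l (vsub b a))) p q r.
Proof.
  unfold edge_contrib; cbv zeta.
  set (fa := dot (vsub a q) (cross (vsub q p) (vsub r q))).
  set (fb := dot (vsub b q) (cross (vsub q p) (vsub r q))).
  intros Hne.
  destruct (excluded_middle_informative _) as [Hin|]; [|congruence].
  exists (fa / (fa - fb)); split; [|exact Hin].
  destruct (Rlt_dec fa 0) as [h1|h1].
  - destruct (Rle_dec 0 fb) as [h2|h2]; [|congruence].
    assert (E: fa / (fa - fb) * (fa - fb) = fa) by (field; lra).
    split; nra.
  - destruct (Rlt_dec fb 0) as [h2|h2]; [|congruence].
    assert (E: fa / (fa - fb) * (fa - fb) = fa) by (field; lra).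
    split; nra.
Qed.

Lemma ec_zero_nn a b p q r : 0 <= fval a p q r -> 0 <= fval b p q r ->
  edge_contrib a b p q r = 0%Z.
Proof.
  unfold edge_contrib, fval; cbv zeta. intros h1 h2.
  destruct (excluded_middle_informative _); [|reflexivity].
  destruct (Rlt_dec _ 0); [lra|].
  destruct (Rlt_dec _ 0); [lra|reflexivity].
Qed.

Lemma vec_ext (a b : vec3) : vx a = vx b -> vy a = vy b -> vz a = vz b -> a = b.
Proof. destruct a, b; simpl; intros; subst; reflexivity. Qed.

Lemma ec_in_b a b p q r : fval a p q r < 0 -> fval b p q r = 0 ->
  edge_contrib a b p q r = ind (in_open_triangle b p q r).
Proof.
  unfold edge_contrib, fval, ind; cbv zeta.
  set (fa := dot (vsub a q) (cross (vsub q p) (vsub r q))).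
  set (fb := dot (vsub b q) (cross (vsub q p) (vsub r q))).
  intros h1 h2.
  replace (vadd a (vscale (fa / (fa - fb)) (vsub b a))) with b.
  2:{ rewrite h2. replace (fa / (fa - 0)) with 1 by (field; lra).
      apply vec_ext; simpl; ring. }
  destruct (excluded_middle_informative _); [|reflexivity].
  destruct (Rlt_dec fa 0); [|lra].
  destruct (Rle_dec 0 fb); [reflexivity|lra].
Qed.

Lemma ec_out_a a b p q r : fval a p q r = 0 -> fval b p q r < 0 ->
  edge_contrib a b p q r = (- ind (in_open_triangle a p q r))%Z.
Proof.
  unfold edge_contrib, fval, ind; cbv zeta.
  set (fa := dot (vsub a q) (cross (vsub q p) (vsub r q))).
  set (fb := dot (vsub b q) (cross (vsub q p) (vsub r q))).
  intros h1 h2.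
  replace (vadd a (vscale (fa / (fa - fb)) (vsub b a))) with a.
  2:{ rewrite h1. replace (0 / (0 - fb)) with 0 by (field; lra).
      apply vec_ext; simpl; ring. }
  destruct (excluded_middle_informative _); [|reflexivity].
  destruct (Rlt_dec fa 0); [lra|].
  destruct (Rlt_dec fb 0); [reflexivity|lra].
Qed.

Lemma fval_p p q r : fval p p q r = 0.
Proof. destruct p, q, r; unfold fval, dot, cross, vsub; simpl; ring. Qed.
Lemma fval_q p q r : fval q p q r = 0.
Proof. destruct p, q, r; unfold fval, dot, cross, vsub; simpl; ring. Qed.
Lemma fval_r p q r : fval r p q r = 0.
Proof. destruct p, q, r; unfold fval, dot, cross, vsub; simpl; ring. Qed.


Definition wing (A V B C u : vec3) (c s r : R) : Prop :=
  vz A = 0 /\ vz B = 0 /\ vz C = 0 /\ 0 < r /\ vz u = 0 /\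
  vx u * vx u + vy u * vy u = 1 /\
  dot u (vsub B A) = 0 /\ 0 < dot u (vsub C A) /\ 0 < dot (vsub B A) (vsub B A) /\
  V = vadd (midpoint A B) (vscale r (vadd (vscale c u) (vscale s e_z))).

Lemma wing_vertex_gen A V B C u c s r al be ga :
  wing A V B C u c s r -> 0 < al -> 0 < be -> 0 < ga -> al + be + ga = 1 ->
  (A = vadd (vscale al A) (vadd (vscale be V) (vscale ga B)) \/
   B = vadd (vscale al A) (vadd (vscale be V) (vscale ga B))) -> False.
Proof.
  destruct A as [ax ay az], B as [bx by_ bz], C as [cx cy cz], u as [ux uy uz], V as [vx_ vy_ vz_].
  unfold wing, dot, vsub, midpoint, vadd, vscale, e_z; simpl.
  intros (hA & hB & hC & hr & hu & hn & hd & hc & hbb & hV) hal hbe hga hs HH.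
  injection hV as hvx hvy hvz. subst.
  set (S := (bx-ax)*(bx-ax) + (by_-ay)*(by_-ay) + (0-0)*(0-0)) in *.
  destruct HH as [HH|HH]; injection HH as ex ey ez.
  - assert (k: 0 < (be/2+ga)) by lra.
    assert (E: (be/2+ga)*S + be*r*(c*(ux*(bx-ax)+uy*(by_-ay)+0*(0-0)) + s*0) =
       (bx-ax)*((be/2+ga)*(bx-ax) + be*r*(c*ux)) + (by_-ay)*((be/2+ga)*(by_-ay) + be*r*(c*uy))) by (unfold S; ring).
    assert (E1: (be/2+ga)*(bx-ax) + be*r*(c*ux) = 0) by (replace al with (1-be-ga) in ex by lra; lra).
    assert (E2: (be/2+ga)*(by_-ay) + be*r*(c*uy) = 0) by (replace al with (1-be-ga) in ey by lra; lra).
    rewrite E1, E2, hd in E.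
    assert (0 < (be/2+ga)*S) by (apply Rmult_lt_0_compat; lra). lra.
  - assert (k: 0 < (be/2+al)) by lra.
    assert (E: (be/2+al)*S - be*r*(c*(ux*(bx-ax)+uy*(by_-ay)+0*(0-0)) + s*0) =
       (bx-ax)*((be/2+al)*(bx-ax) - be*r*(c*ux)) + (by_-ay)*((be/2+al)*(by_-ay) - be*r*(c*uy))) by (unfold S; ring).
    assert (E1: (be/2+al)*(bx-ax) - be*r*(c*ux) = 0) by (replace ga with (1-be-al) in ex by lra; lra).
    assert (E2: (be/2+al)*(by_-ay) - be*r*(c*uy) = 0) by (replace ga with (1-be-al) in ey by lra; lra).
    rewrite E1, E2, hd in E.
    assert (0 < (be/2+al)*S) by (apply Rmult_lt_0_compat; lra). lra.
Qed.

Lemma wing_notA A V B C u c s r : wing A V B C u c s r -> ~ in_open_triangle A A V B.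
Proof.
  intros W (al & be & ga & h1 & h2 & h3 & h4 & h5).
  eapply (wing_vertex_gen A V B C u c s r al be ga); eauto.
Qed.
Lemma wing_notB A V B C u c s r : wing A V B C u c s r -> ~ in_open_triangle B A V B.
Proof.
  intros W (al & be & ga & h1 & h2 & h3 & h4 & h5).
  eapply (wing_vertex_gen A V B C u c s r al be ga); eauto.
Qed.


Definition wings (HG : hexagon) (u1 u2 u3 : vec3) (c1 s1 c2 s2 c3 s3 r1 r2 r3 : R) : Prop :=
  wing (h1 HG) (h2 HG) (h3 HG) (h5 HG) u1 c1 s1 r1 /\
  wing (h3 HG) (h4 HG) (h5 HG) (h1 HG) u2 c2 s2 r2 /\
  wing (h5 HG) (h6 HG) (h1 HG) (h3 HG) u3 c3 s3 r3.

Definition rot (HG : hexagon) : hexagon := Hex (h3 HG) (h4 HG) (h5 HG) (h6 HG) (h1 HG) (h2 HG).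

Lemma wings_rot (HG : hexagon) (u1 u2 u3 : vec3) (c1 s1 c2 s2 c3 s3 r1 r2 r3 : R) :
  wings HG u1 u2 u3 c1 s1 c2 s2 c3 s3 r1 r2 r3 ->
  wings (rot HG) u2 u3 u1 c2 s2 c3 s3 c1 s1 r2 r3 r1.
Proof. unfold wings, rot; simpl; tauto. Qed.

Lemma Delta_expand (HG : hexagon) : Delta HG 2 =
  (edge_contrib (h1 HG) (h2 HG) (h1 HG) (h2 HG) (h3 HG) + edge_contrib (h2 HG) (h3 HG) (h1 HG) (h2 HG) (h3 HG) +
   edge_contrib (h3 HG) (h4 HG) (h1 HG) (h2 HG) (h3 HG) + edge_contrib (h4 HG) (h5 HG) (h1 HG) (h2 HG) (h3 HG) +
   edge_contrib (h5 HG) (h6 HG) (h1 HG) (h2 HG) (h3 HG) + edge_contrib (h6 HG) (h1 HG) (h1 HG) (h2 HG) (h3 HG))%Z.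
Proof. reflexivity. Qed.

Lemma Delta_rot4 (HG : hexagon) : Delta HG 4 = Delta (rot HG) 2.
Proof.
  rewrite Delta_expand. unfold Delta. cbv zeta.
  change (vtx HG (4+5)) with (h3 HG). change (vtx HG 4) with (h4 HG). change (vtx HG 5) with (h5 HG).
  change (vtx HG 1) with (h1 HG). change (vtx HG 2) with (h2 HG). change (vtx HG 3) with (h3 HG).
  change (vtx HG 6) with (h6 HG). simpl. lia.
Qed.

Lemma Delta_rot6 (HG : hexagon) : Delta HG 6 = Delta (rot (rot HG)) 2.
Proof.
  rewrite Delta_expand. unfold Delta. cbv zeta.
  change (vtx HG (6+5)) with (h5 HG). change (vtx HG 6) with (h6 HG). change (vtx HG 7) with (h1 HG).
  change (vtx HG 1) with (h1 HG). change (vtx HG 2) with (h2 HG). change (vtx HG 3) with (h3 HG).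
  change (vtx HG 4) with (h4 HG). change (vtx HG 5) with (h5 HG). simpl. lia.
Qed.

Lemma ind_false P : ~ P -> ind P = 0%Z.
Proof. unfold ind; intros; destruct (excluded_middle_informative P); tauto. Qed.

Section S.
Variables (HG : hexagon) (u1 u2 u3 : vec3) (c1 s1 c2 s2 c3 s3 r1 r2 r3 : R).
Hypothesis W : wings HG u1 u2 u3 c1 s1 c2 s2 c3 s3 r1 r2 r3.

Lemma Delta_split : Delta HG 2 =
  (edge_contrib (h4 HG) (h5 HG) (h1 HG) (h2 HG) (h3 HG) + edge_contrib (h5 HG) (h6 HG) (h1 HG) (h2 HG) (h3 HG))%Z.
Proof.
  destruct W as (W1 & W2 & W3).
  rewrite Delta_expand.
  rewrite (ec_zero_nn (h1 HG)), (ec_zero_nn (h2 HG) (h3 HG)) by (rewrite ?fval_p, ?fval_q, ?fval_r; lra).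
  assert (E3: edge_contrib (h3 HG) (h4 HG) (h1 HG) (h2 HG) (h3 HG) = 0%Z).
  { destruct (Rle_dec 0 (fval (h4 HG) (h1 HG) (h2 HG) (h3 HG))).
    - apply ec_zero_nn; rewrite ?fval_r; lra.
    - rewrite ec_out_a by (rewrite ?fval_r; lra). rewrite ind_false; [lia|].
      eapply wing_notB; exact W1. }
  assert (E6: edge_contrib (h6 HG) (h1 HG) (h1 HG) (h2 HG) (h3 HG) = 0%Z).
  { destruct (Rle_dec 0 (fval (h6 HG) (h1 HG) (h2 HG) (h3 HG))).
    - apply ec_zero_nn; rewrite ?fval_p; lra.
    - rewrite ec_in_b by (rewrite ?fval_p; lra). rewrite ind_false; [lia|].
      eapply wing_notA; exact W1. }
  rewrite E3, E6. lia.
Qed.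

End S.


Definition C24 (HG : hexagon) : Prop := exists l, 0 <= l <= 1 /\
  in_open_triangle (vadd (h4 HG) (vscale l (vsub (h5 HG) (h4 HG)))) (h1 HG) (h2 HG) (h3 HG).
Definition C25 (HG : hexagon) : Prop := exists l, 0 <= l <= 1 /\
  in_open_triangle (vadd (h5 HG) (vscale l (vsub (h6 HG) (h5 HG)))) (h1 HG) (h2 HG) (h3 HG).
Definition REL (cT sT cS sS : R) : Prop := exists t t', 0 < t /\ 0 <= t' /\
  t * sT = t' * sS /\ 0 < t * cT + t' * cS.

Lemma lemV (Ox Oy Px Py Qx Qy ux uy vx' vy' c s c' s' a b t t' : R) :
  ux*ux + uy*uy = 1 -> vx'*vx' + vy'*vy' = 1 ->
  ux*(Px-Ox) + uy*(Py-Oy) = 0 -> vx'*(Qx-Ox) + vy'*(Qy-Oy) = 0 ->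
  0 < vx'*(Px-Ox) + vy'*(Py-Oy) -> 0 < ux*(Qx-Ox) + uy*(Qy-Oy) -> 0 < a -> 0 < b ->
  a*(Px-Ox) + t*(c*ux) = b*(Qx-Ox) + t'*(c'*vx') ->
  a*(Py-Oy) + t*(c*uy) = b*(Qy-Oy) + t'*(c'*vy') ->
  0 < t*c + t'*c'.
Proof.
  intros n1 n2 o1 o2 p1 p2 ha hb ex ey.
  set (D := ux*vx' + uy*vy').
  assert (E1: a*(vx'*(Px-Ox) + vy'*(Py-Oy)) + t*c*D = t'*c').
  { transitivity (vx'*(a*(Px-Ox) + t*(c*ux)) + vy'*(a*(Py-Oy) + t*(c*uy))).
    - unfold D; ring.
    - rewrite ex, ey. transitivity (b*(vx'*(Qx-Ox) + vy'*(Qy-Oy)) + t'*c'*(vx'*vx'+vy'*vy')); [ring|].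
      rewrite o2, n2; ring. }
  assert (L: ux*(a*(Px-Ox) + t*(c*ux)) + uy*(a*(Py-Oy) + t*(c*uy)) = t*c).
  { replace (ux*(a*(Px-Ox) + t*(c*ux)) + uy*(a*(Py-Oy) + t*(c*uy))) with
      (a*(ux*(Px-Ox)+uy*(Py-Oy)) + t*c*(ux*ux+uy*uy)) by ring. rewrite o1, n1; ring. }
  rewrite ex, ey in L.
  assert (E2: t*c = b*(ux*(Qx-Ox) + uy*(Qy-Oy)) + t'*c'*D) by (unfold D; lra).
  assert (HD: D < 1).
  { destruct (Rlt_dec D 1) as [h|h]; [exact h|].
    exfalso. assert (Z: (ux-vx')*(ux-vx') + (uy-vy')*(uy-vy') <= 0) by (unfold D in h; apply Rnot_lt_le in h; nra).
    pose proof (Rle_0_sqr (ux-vx')) as q1. pose proof (Rle_0_sqr (uy-vy')) as q2. unfold Rsqr in q1, q2.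
    assert (A1: (ux-vx')*(ux-vx') = 0) by lra. assert (A2: (uy-vy')*(uy-vy') = 0) by lra.
    apply Rmult_integral in A1. apply Rmult_integral in A2.
    assert (zx: ux = vx') by (destruct A1; lra). assert (zy: uy = vy') by (destruct A2; lra). subst. lra. }
  assert (K: (1-D)*(t*c + t'*c') = a*(vx'*(Px-Ox) + vy'*(Py-Oy)) + b*(ux*(Qx-Ox) + uy*(Qy-Oy))) by nra.
  assert (0 < a*(vx'*(Px-Ox) + vy'*(Py-Oy)) + b*(ux*(Qx-Ox) + uy*(Qy-Oy))).
  { assert (0 < a*(vx'*(Px-Ox) + vy'*(Py-Oy))) by (apply Rmult_lt_0_compat; lra).
    assert (0 < b*(ux*(Qx-Ox) + uy*(Qy-Oy))) by (apply Rmult_lt_0_compat; lra). lra. }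
  nra.
Qed.

Ltac explode :=
  repeat match goal with
  | v : vec3 |- _ => destruct v
  | HG : hexagon |- _ => destruct HG
  end;
  unfold wings, wing, C24, C25, in_open_triangle, dot, vsub, vadd, vscale, midpoint, e_z in *;
  simpl in *.

Lemma rel24 HG u1 u2 u3 c1 s1 c2 s2 c3 s3 r1 r2 r3 :
  wings HG u1 u2 u3 c1 s1 c2 s2 c3 s3 r1 r2 r3 -> C24 HG -> REL c1 s1 c2 s2.
Proof.
  destruct HG as [[ax ay az] [bx by_ bz] [cx cy cz] [dx dy dz] [ex ey ez] [fx fy fz]].
  destruct u1 as [ux uy uz], u2 as [wx wy wz].
  explode.
  intros ((z1 & z3 & z5 & hr1 & uz1 & un1 & ud1 & uc1 & bb1 & V1) &
          (_ & _ & _ & hr2 & uz2 & un2 & ud2 & uc2 & bb2 & V2) & _)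
         (l & hl & al & be & ga & hal & hbe & hga & hs & HX).
  injection V1 as e1 e2 e3. injection V2 as f1 f2 f3. injection HX as x1 x2 x3.
  subst.
  replace ga with (1 - al - be) in * by lra.
  exists (be * r1), ((1 - l) * r2). split; [|split; [|split]].
  - apply Rmult_lt_0_compat; lra.
  - apply Rmult_le_pos; lra.
  - lra.
  - apply (lemV cx cy ax ay ex ey ux uy wx wy c1 s1 c2 s2 (al + be/2) ((1+l)/2)); try lra.
Qed.

Lemma rel25 HG u1 u2 u3 c1 s1 c2 s2 c3 s3 r1 r2 r3 :
  wings HG u1 u2 u3 c1 s1 c2 s2 c3 s3 r1 r2 r3 -> C25 HG -> REL c1 s1 c3 s3.
Proof.
  destruct HG as [[ax ay az] [bx by_ bz] [cx cy cz] [dx dy dz] [ex ey ez] [fx fy fz]].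
  destruct u1 as [ux uy uz], u3 as [wx wy wz].
  explode.
  intros ((z1 & z3 & z5 & hr1 & uz1 & un1 & ud1 & uc1 & bb1 & V1) & _ &
          (_ & _ & _ & hr3 & uz3 & un3 & ud3 & uc3 & bb3 & V3))
         (l & hl & al & be & ga & hal & hbe & hga & hs & HX).
  injection V1 as e1 e2 e3. injection V3 as f1 f2 f3. injection HX as x1 x2 x3.
  subst.
  replace al with (1 - ga - be) in * by lra.
  exists (be * r1), (l * r3). split; [|split; [|split]].
  - apply Rmult_lt_0_compat; lra.
  - apply Rmult_le_pos; lra.
  - lra.
  - apply (lemV ax ay cx cy ex ey ux uy wx wy c1 s1 c3 s3 (be/2 + ga) (1 - l/2)); try lra.
Qed.

Lemma cross2 HG u1 u2 u3 c1 s1 c2 s2 c3 s3 r1 r2 r3 :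
  wings HG u1 u2 u3 c1 s1 c2 s2 c3 s3 r1 r2 r3 -> Delta HG 2 <> 0%Z -> C24 HG \/ C25 HG.
Proof.
  intros W D. rewrite (Delta_split HG u1 u2 u3 c1 s1 c2 s2 c3 s3 r1 r2 r3 W) in D.
  destruct (Z.eq_dec (edge_contrib (h4 HG) (h5 HG) (h1 HG) (h2 HG) (h3 HG)) 0) as [e|e].
  - right. rewrite e in D. apply ec_nz. lia.
  - left. apply ec_nz. exact e.
Qed.

Lemma rel_pos cT sT cS sS : REL cT sT cS sS -> 0 < sT -> 0 < sS /\ 0 < sT*cS + cT*sS.
Proof.
  intros (t & t' & ht & ht' & E & K) hs.
  assert (0 < t * sT) by (apply Rmult_lt_0_compat; lra).
  assert (0 < t') by (destruct ht'; [lra| subst; lra]).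
  assert (0 < sS) by nra.
  split; [lra|].
  assert (Q: t' * (sT*cS + cT*sS) = sT * (t*cT + t'*cS)).
  { transitivity (sT*t'*cS + cT*(t'*sS)); [ring|]. rewrite <- E. ring. }
  assert (0 < sT * (t*cT + t'*cS)) by (apply Rmult_lt_0_compat; lra).
  destruct (Rle_dec (sT*cS + cT*sS) 0) as [h|h]; [|lra].
  assert (t' * (sT*cS + cT*sS) <= 0) by (replace 0 with (t'*0) by ring; apply Rmult_le_compat_l; lra).
  lra.
Qed.

Lemma rel_neg cT sT cS sS : REL cT sT cS sS -> sT < 0 -> 0 < sS -> False.
Proof.
  intros (t & t' & ht & ht' & E & K) hs hS. nra.
Qed.


Lemma fval_vert (a p q r : vec3) : vz p = 0 -> vz q = 0 -> vz r = 0 ->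
  fval a p q r = vz a * ((vx q - vx p)*(vy r - vy q) - (vy q - vy p)*(vx r - vx q)).
Proof.
  destruct a, p, q, r; unfold fval, dot, cross, vsub; simpl; intros; subst; ring.
Qed.

Lemma wing_vz A V B C u c s r : wing A V B C u c s r -> vz V = r * s.
Proof.
  intros (zA & zB & zC & hr & zu & _ & _ & _ & _ & HV). subst V.
  unfold vadd, vscale, midpoint, e_z; simpl. rewrite zA, zB, zu. ring.
Qed.

Lemma cancel2 HG u1 u2 u3 c1 s1 c2 s2 c3 s3 r1 r2 r3 :
  wings HG u1 u2 u3 c1 s1 c2 s2 c3 s3 r1 r2 r3 -> s1 = 0 -> 0 < s2 -> 0 < s3 -> Delta HG 2 = 0%Z.
Proof.
  intros W hs1 hs2 hs3.
  rewrite (Delta_split HG u1 u2 u3 c1 s1 c2 s2 c3 s3 r1 r2 r3 W).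
  destruct W as (W1 & W2 & W3).
  pose proof (wing_vz _ _ _ _ _ _ _ _ W1) as z2.
  pose proof (wing_vz _ _ _ _ _ _ _ _ W2) as z4.
  pose proof (wing_vz _ _ _ _ _ _ _ _ W3) as z6.
  destruct W1 as (z1 & z3 & z5 & hr1 & _). destruct W2 as (_ & _ & _ & hr2 & _).
  destruct W3 as (_ & _ & _ & hr3 & _).
  rewrite hs1, Rmult_0_r in z2.
  set (Nz := (vx (h2 HG) - vx (h1 HG))*(vy (h3 HG) - vy (h2 HG)) - (vy (h2 HG) - vy (h1 HG))*(vx (h3 HG) - vx (h2 HG))).
  assert (F4: fval (h4 HG) (h1 HG) (h2 HG) (h3 HG) = r2*s2*Nz) by (rewrite fval_vert by assumption; rewrite z4; reflexivity).
  assert (F5: fval (h5 HG) (h1 HG) (h2 HG) (h3 HG) = 0) by (rewrite fval_vert by assumption; rewrite z5; ring).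
  assert (F6: fval (h6 HG) (h1 HG) (h2 HG) (h3 HG) = r3*s3*Nz) by (rewrite fval_vert by assumption; rewrite z6; reflexivity).
  assert (p2: 0 < r2*s2) by (apply Rmult_lt_0_compat; lra).
  assert (p3: 0 < r3*s3) by (apply Rmult_lt_0_compat; lra).
  destruct (Rle_dec 0 Nz) as [hN|hN].
  - rewrite !ec_zero_nn; try lia; rewrite ?F4, ?F5, ?F6; try lra; apply Rmult_le_pos; lra.
  - assert (n4: r2*s2*Nz < 0) by nra.
    assert (n6: r3*s3*Nz < 0) by nra.
    rewrite ec_in_b by lra. rewrite ec_out_a by lra. lia.
Qed.


Lemma cev_comp (a b c d e f al be ga al' be' ga' l m r1 r2 r3 w1 w2 w3 k n : R) :
  b = 1/2*(a+c) + r1*w1 -> d = 1/2*(c+e) + r2*w2 -> f = 1/2*(e+a) + r3*w3 ->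
  a + l*(b-a) = al*c + (be*d + ga*e) -> b + m*(c-b) = al'*e + (be'*f + ga'*a) ->
  al+be+ga = 1 -> al'+be'+ga' = 1 ->
  (1-k)*c + k*(a + l*(b-a)) = (1-n)*a + n*(b + m*(c-b)) ->
  (1 - k + k*(al+be/2))*(c - e) + (k*be*r2)*w2 = (1 - n + n*(be'/2+ga'))*(a - e) + (n*be'*r3)*w3.
Proof.
  intros hb hd hf X X' s s' Y.
  transitivity ((1-k)*c + k*(al*c + (be*d + ga*e)) - e).
  { rewrite hd. replace ga with (1-al-be) by lra. field. }
  rewrite <- X, Y, X'.
  rewrite hf. replace al' with (1-be'-ga') by lra. field.
Qed.

Lemma Yid (a b c l m : R) : 0 < l -> m < 1 -> l <= 1 ->
  let q := 1 - m in let D := q + l - l*q in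
  (1-q/D)*c + (q/D)*(a + l*(b-a)) = (1-l/D)*a + (l/D)*(b + m*(c-b)).
Proof.
  intros hl hm hl1 q D.
  assert (HD: 0 < D) by (unfold D, q; nra).
  unfold D, q in *. field. lra.
Qed.

Lemma cevian HG u1 u2 u3 c1 s1 c2 s2 c3 s3 r1 r2 r3 :
  wings HG u1 u2 u3 c1 s1 c2 s2 c3 s3 r1 r2 r3 -> 0 < s1 -> 0 < s2 -> 0 < s3 ->
  C25 (rot HG) -> C24 (rot (rot HG)) -> 0 < s2*c3 + c2*s3.
Proof.
  destruct HG as [[ax ay az] [bx by_ bz] [cx cy cz] [dx dy dz] [ex ey ez] [fx fy fz]].
  destruct u1 as [ux uy uz], u2 as [vx_ vy_ vz_], u3 as [wx wy wz].
  unfold rot. explode.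
  intros ((z1 & z3 & z5 & hr1 & uz1 & un1 & ud1 & uc1 & bb1 & V1) &
          (_ & _ & _ & hr2 & uz2 & un2 & ud2 & uc2 & bb2 & V2) &
          (_ & _ & _ & hr3 & uz3 & un3 & ud3 & uc3 & bb3 & V3)) hs1 hs2 hs3
         (l & hl & al & be & ga & hal & hbe & hga & hs & HX)
         (m & hm & al' & be' & ga' & hal' & hbe' & hga' & hs' & HX').
  injection V1 as e1 e2 e3. injection V2 as f1 f2 f3. injection V3 as g1 g2 g3.
  injection HX as x1 x2 x3. injection HX' as y1 y2 y3.
  subst az cz ez uz vz_ wz.
  assert (hl0 : 0 < l).
  { rewrite e3, f3 in x3. assert (P: 0 < be*(r2*s2)) by (apply Rmult_lt_0_compat; [lra|apply Rmult_lt_0_compat; lra]).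
    assert (P1: 0 < r1*s1) by (apply Rmult_lt_0_compat; lra).
    assert (E: l*(r1*s1) = be*(r2*s2)) by lra.
    destruct (Rle_dec l 0) as [h|h]; [|lra].
    assert (l*(r1*s1) <= 0*(r1*s1)) by (apply Rmult_le_compat_r; lra). lra. }
  assert (hm0 : m < 1).
  { rewrite e3, g3 in y3. assert (P: 0 < be'*(r3*s3)) by (apply Rmult_lt_0_compat; [lra|apply Rmult_lt_0_compat; lra]).
    assert (P1: 0 < r1*s1) by (apply Rmult_lt_0_compat; lra).
    assert (E: (1-m)*(r1*s1) = be'*(r3*s3)) by lra.
    destruct (Rle_dec (1-m) 0) as [h|h]; [|lra].
    assert ((1-m)*(r1*s1) <= 0*(r1*s1)) by (apply Rmult_le_compat_r; lra). lra. }
  set (q := 1 - m). set (D := q + l - l*q).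
  assert (hD : 0 < D) by (unfold D, q; nra).
  set (k := q/D). set (n := l/D).
  assert (hk : 0 < k /\ k <= 1).
  { unfold k. split; [apply Rdiv_lt_0_compat; unfold q; lra|].
    apply (Rmult_le_reg_r D); [lra|]. unfold Rdiv. rewrite Rmult_assoc, Rinv_l by lra. unfold D, q; nra. }
  assert (hn : 0 < n /\ n <= 1).
  { unfold n. split; [apply Rdiv_lt_0_compat; lra|].
    apply (Rmult_le_reg_r D); [lra|]. unfold Rdiv. rewrite Rmult_assoc, Rinv_l by lra. unfold D, q; nra. }
  pose proof (Yid ax bx cx l m hl0 hm0 (proj2 hl)) as Yx.
  pose proof (Yid ay by_ cy l m hl0 hm0 (proj2 hl)) as Yy.
  pose proof (Yid 0 bz 0 l m hl0 hm0 (proj2 hl)) as Yz.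
  cbv zeta in Yx, Yy, Yz. fold q D in Yx, Yy, Yz. fold k n in Yx, Yy, Yz.
  pose proof (cev_comp _ _ _ _ _ _ _ _ _ _ _ _ l m _ _ _ _ _ _ k n e1 f1 g1 x1 y1 hs hs' Yx) as Ex.
  pose proof (cev_comp _ _ _ _ _ _ _ _ _ _ _ _ l m _ _ _ _ _ _ k n e2 f2 g2 x2 y2 hs hs' Yy) as Ey.
  assert (e3' : bz = 1/2*(0+0) + r1*(c1*0 + s1*1)) by exact e3.
  pose proof (cev_comp _ _ _ _ _ _ _ _ _ _ _ _ l m _ _ _ _ _ _ k n e3' f3 g3 x3 y3 hs hs' Yz) as Ez.
  apply (rel_pos c2 s2 c3 s3); [|exact hs2].
  exists (k*be*r2), (n*be'*r3). split; [|split; [|split]].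
  - apply Rmult_lt_0_compat; [apply Rmult_lt_0_compat|]; lra.
  - apply Rmult_le_pos; [apply Rmult_le_pos|]; lra.
  - lra.
  - apply (lemV ex ey cx cy ax ay vx_ vy_ wx wy c2 s2 c3 s3
             (1 - k + k*(al+be/2)) (1 - n + n*(be'/2+ga'))); try lra; nra.
Qed.


Lemma perp_ok a b o : vz a = 0 -> vz b = 0 -> vz o = 0 ->
  (vx b - vx a)*(vy o - vy a) - (vy b - vy a)*(vx o - vx a) <> 0 ->
  vz (perp_toward a b o) = 0 /\
  vx (perp_toward a b o) * vx (perp_toward a b o) + vy (perp_toward a b o) * vy (perp_toward a b o) = 1 /\
  dot (perp_toward a b o) (vsub b a) = 0 /\ 0 < dot (perp_toward a b o) (vsub o a).
Proof.
  destruct a as [ax ay az], b as [bx by_ bz], o as [ox oy oz]. simpl. intros za zb zo W.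
  subst. unfold perp_toward, vnorm, dot, vsub, midpoint, vadd, vscale. simpl.
  set (n2 := - (by_ - ay) * - (by_ - ay) + (bx - ax) * (bx - ax) + 0 * 0).
  assert (hn2 : 0 < n2).
  { unfold n2. pose proof (Rle_0_sqr (bx-ax)) as q1. pose proof (Rle_0_sqr (by_-ay)) as q2. unfold Rsqr in q1, q2.
    destruct (Req_dec (bx - ax) 0) as [e|e].
    - assert (e2: by_ - ay <> 0) by (intro e2; apply W; rewrite e, e2; ring).
      assert (0 < (by_-ay)*(by_-ay)) by (apply Rsqr_pos_lt; exact e2). lra.
    - assert (0 < (bx-ax)*(bx-ax)) by (apply Rsqr_pos_lt; exact e). lra. }
  assert (hs : sqrt n2 * sqrt n2 = n2) by (apply sqrt_sqrt; lra).
  assert (hn2e : n2 = - (by_ - ay) * - (by_ - ay) + (bx - ax) * (bx - ax) + 0 * 0) by reflexivity.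
  clearbody n2.
  assert (hsp : 0 < sqrt n2) by (apply sqrt_lt_R0; lra).
  set (Wd := - (by_ - ay) * (ox - 1 / 2 * (ax + bx)) + (bx - ax) * (oy - 1 / 2 * (ay + by_)) + 0 * (0 - 1 / 2 * (0 + 0))).
  assert (hW : Wd = (bx - ax)*(oy - ay) - (by_ - ay)*(ox - ax)) by (unfold Wd; field).
  destruct (Rlt_dec 0 Wd) as [h|h].
  - split; [ring|]. split; [|split].
    + transitivity ((-(by_-ay) * -(by_-ay) + (bx-ax)*(bx-ax)) / (sqrt n2 * sqrt n2)); [field; lra|].
      rewrite hs. replace (-(by_-ay) * -(by_-ay) + (bx-ax)*(bx-ax)) with n2 by (rewrite hn2e; ring). field. lra.
    + field. lra.
    + replace (1 / sqrt n2 * - (by_ - ay) * (ox - ax) + 1 / sqrt n2 * (bx - ax) * (oy - ay) + 1 / sqrt n2 * 0 * (0 - 0))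
        with (Wd / sqrt n2) by (rewrite hW; field; lra).
      apply Rdiv_lt_0_compat; lra.
  - split; [ring|]. split; [|split].
    + transitivity ((-(by_-ay) * -(by_-ay) + (bx-ax)*(bx-ax)) / (sqrt n2 * sqrt n2)); [field; lra|].
      rewrite hs. replace (-(by_-ay) * -(by_-ay) + (bx-ax)*(bx-ax)) with n2 by (rewrite hn2e; ring). field. lra.
    + field. lra.
    + assert (Wd < 0) by (rewrite hW in h |- *; lra).
      replace (-1 / sqrt n2 * - (by_ - ay) * (ox - ax) + -1 / sqrt n2 * (bx - ax) * (oy - ay) + -1 / sqrt n2 * 0 * (0 - 0))
        with ((- Wd) / sqrt n2) by (rewrite hW; field; lra).
      apply Rdiv_lt_0_compat; lra.
Qed.

Lemma ang_pos th : 0 <= th < 2 * PI -> 0 < sin th -> 0 < th < PI.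
Proof.
  intros [h1 h2] hs. pose proof PI_RGT_0.
  split.
  - destruct h1 as [h1|h1]; [exact h1|]. subst. rewrite sin_0 in hs. lra.
  - destruct (Rlt_dec th PI) as [h|h]; [exact h|].
    assert (E: sin th = - sin (th - PI)).
    { replace th with ((th - PI) + PI) at 1 by ring. apply neg_sin. }
    assert (0 <= sin (th - PI)) by (apply sin_ge_0; lra). lra.
Qed.

Lemma sum_lt a b : 0 < a < PI -> 0 < b < PI -> 0 < sin a * cos b + cos a * sin b -> a + b < PI.
Proof.
  intros ha hb hs. rewrite <- sin_plus in hs.
  destruct (Rlt_dec (a+b) PI) as [h|h]; [exact h|].
  assert (E: sin (a+b) = - sin (a + b - PI)).
  { replace (a+b) with ((a + b - PI) + PI) at 1 by ring. apply neg_sin. }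
  assert (0 <= sin (a + b - PI)) by (apply sin_ge_0; lra). lra.
Qed.

Lemma posL HG u1 u2 u3 c1 s1 c2 s2 c3 s3 r1 r2 r3 :
  wings HG u1 u2 u3 c1 s1 c2 s2 c3 s3 r1 r2 r3 -> Delta HG 2 <> 0%Z -> 0 < s2 -> 0 < s3 -> 0 < s1.
Proof.
  intros W D h2 h3.
  destruct (Rlt_dec 0 s1) as [h|h]; [exact h|].
  destruct (Req_dec s1 0) as [e|e].
  - exfalso. apply D. eapply cancel2; eauto.
  - exfalso. destruct (cross2 _ _ _ _ _ _ _ _ _ _ _ _ _ W D) as [C|C].
    + eapply rel_neg; [eapply rel24; eauto | lra | exact h2].
    + eapply rel_neg; [eapply rel25; eauto | lra | exact h3].
Qed.


Lemma rsign1 x : Rsign x = 1%Z -> 0 < x.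
Proof. unfold Rsign. destruct (Rlt_dec 0 x); [auto|]. destruct (Rlt_dec x 0); discriminate. Qed.

Lemma rsign_cases x : Rsign x = 1%Z \/ Rsign x = 0%Z \/ Rsign x = (-1)%Z.
Proof. unfold Rsign. destruct (Rlt_dec 0 x); [auto|]. destruct (Rlt_dec x 0); auto. Qed.

Lemma rpos_of d : 0 < d < 2 -> 0 < /2 * sqrt (4 - d ^ 2).
Proof.
  intros hd. apply Rmult_lt_0_compat; [lra|]. apply sqrt_lt_R0. nra.
Qed.

Theorem mainTheorem6 :
  forall (H : hexagon) (th1 th2 th3 : R),
    equilateral H -> embedded H ->
    standard_position H -> aa_defined H ->
    is_angle H 1 th1 -> is_angle H 2 th2 -> is_angle H 3 th3 ->
    J H = (1%Z, 1%Z) ->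
    (0 < th1 < PI /\ 0 < th2 < PI /\ 0 < th3 < PI) /\
    th1 + th2 < PI /\ th1 + th3 < PI /\ th2 + th3 < PI.
Proof.
  intros H th1 th2 th3 _ _ Hstd [Hnc Hd] [T1 EV1] [T2 EV2] [T3 EV3] HJ.
  pose proof (rpos_of _ (Hd 1%nat ltac:(lia))) as hr1.
  pose proof (rpos_of _ (Hd 2%nat ltac:(lia))) as hr2.
  pose proof (rpos_of _ (Hd 3%nat ltac:(lia))) as hr3.
  set (r1 := /2 * sqrt (4 - diag H 1 ^ 2)) in *.
  set (r2 := /2 * sqrt (4 - diag H 2 ^ 2)) in *.
  set (r3 := /2 * sqrt (4 - diag H 3 ^ 2)) in *.
  clearbody r1 r2 r3.
  unfold J in HJ. injection HJ as HJ1 HJ2.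
  rewrite Delta_rot4, Delta_rot6 in HJ1, HJ2.
  set (u1 := u_i H 1) in *. set (u2 := u_i H 2) in *. set (u3 := u_i H 3) in *.
  change (u_i H 1) with (perp_toward (h1 H) (h3 H) (h5 H)) in u1.
  change (u_i H 2) with (perp_toward (h3 H) (h5 H) (h1 H)) in u2.
  change (u_i H 3) with (perp_toward (h5 H) (h1 H) (h3 H)) in u3.
  change (vtx H (2*1)) with (h2 H) in EV1. change (vtx H (2*2)) with (h4 H) in EV2.
  change (vtx H (2*3)) with (h6 H) in EV3.
  change (mid_i H 1) with (midpoint (h1 H) (h3 H)) in EV1.
  change (mid_i H 2) with (midpoint (h3 H) (h5 H)) in EV2.
  change (mid_i H 3) with (midpoint (h5 H) (h1 H)) in EV3.
  unfold curl in HJ2.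
  change (vtx H 1) with (h1 H) in HJ2. change (vtx H 2) with (h2 H) in HJ2.
  change (vtx H 3) with (h3 H) in HJ2. change (vtx H 5) with (h5 H) in HJ2.
  unfold standard_position in Hstd.
  change (vtx H 1) with (h1 H) in Hstd. change (vtx H 3) with (h3 H) in Hstd.
  change (vtx H 5) with (h5 H) in Hstd.
  clear Hnc Hd.
  destruct H as [P1 P2 P3 P4 P5 P6]. simpl in *.
  destruct P3 as [px py pz], P5 as [qx qy qz]. unfold origin in Hstd. simpl in Hstd.
  destruct Hstd as (-> & hp & -> & -> & -> & hq).
  assert (PQ : 0 < px * qy) by (apply Rmult_lt_0_compat; lra).
  destruct (perp_ok (V3 0 0 0) (V3 px 0 0) (V3 qx qy 0)) as (uz1 & un1 & ud1 & uc1); simpl; try reflexivity; try lra.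
  destruct (perp_ok (V3 px 0 0) (V3 qx qy 0) (V3 0 0 0)) as (uz2 & un2 & ud2 & uc2); simpl; try reflexivity; try lra.
  destruct (perp_ok (V3 qx qy 0) (V3 0 0 0) (V3 px 0 0)) as (uz3 & un3 & ud3 & uc3); simpl; try reflexivity; try lra.
  fold u1 u2 u3 in uz1, un1, ud1, uc1, uz2, un2, ud2, uc2, uz3, un3, ud3, uc3.
  clearbody u1 u2 u3.
  set (G := Hex (V3 0 0 0) P2 (V3 px 0 0) P4 (V3 qx qy 0) P6).
  assert (W : wings G u1 u2 u3 (cos th1) (sin th1) (cos th2) (sin th2) (cos th3) (sin th3) r1 r2 r3).
  { unfold wings, wing, G; simpl.
    assert (0 < px*px) by (apply Rmult_lt_0_compat; lra).
    assert (0 < qy*qy) by (apply Rmult_lt_0_compat; lra).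
    pose proof (Rle_0_sqr (qx - px)) as s1. pose proof (Rle_0_sqr qx) as s2. unfold Rsqr in s1, s2.
    unfold dot, vsub; simpl.
    repeat split; try reflexivity; try assumption; try lra. }
  fold G in HJ1. fold G in HJ2.
  pose proof W as W'. destruct W' as (W1 & _ & _).
  pose proof (wing_vz _ _ _ _ _ _ _ _ W1) as z2. simpl in z2.
  match type of HJ2 with context [Rsign ?x] =>
    assert (Ex : x = px*qy*(r1*sin th1)) by (rewrite <- z2; destruct P2; unfold dot, cross, vsub; simpl; ring);
    rewrite Ex in HJ2 end.
  assert (PW : forall x, Z.pow_pos x 2 = (x*x)%Z) by (intros; unfold Z.pow_pos; simpl; ring).
  rewrite !PW in HJ2.
  pose proof (wings_rot _ _ _ _ _ _ _ _ _ _ _ _ _ W) as W2.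
  pose proof (wings_rot _ _ _ _ _ _ _ _ _ _ _ _ _ W2) as W3.
  pose proof (wings_rot _ _ _ _ _ _ _ _ _ _ _ _ _ W3) as W4.
  clearbody G.
  set (D2 := Delta G 2) in *. set (D4 := Delta (rot G) 2) in *. set (D6 := Delta (rot (rot G)) 2) in *.
  assert (N2 : D2 <> 0%Z) by (intro e; rewrite e in HJ1; lia).
  assert (N4 : D4 <> 0%Z) by (intro e; rewrite e in HJ1; lia).
  assert (N6 : D6 <> 0%Z) by (intro e; rewrite e in HJ1; lia).
  assert (hs1 : 0 < sin th1).
  { destruct (rsign_cases (px*qy*(r1*sin th1))) as [c|[c|c]]; rewrite c in HJ2.
    - apply rsign1 in c.
      assert (0 < px*qy*r1) by (apply Rmult_lt_0_compat; lra).
      destruct (Rlt_dec 0 (sin th1)) as [h|h]; [exact h|].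
      assert (px*qy*r1*sin th1 <= px*qy*r1*0) by (apply Rmult_le_compat_l; lra). lra.
    - lia.
    - exfalso. assert (E: (D2 * D2 * (D4 * D4) * (D6 * D6) = (D2*D4*D6)*(D2*D4*D6))%Z) by ring.
      rewrite HJ1 in E. lia. }
  clear HJ1 HJ2.
  assert (hs23 : 0 < sin th2 /\ 0 < sin th3).
  { destruct (cross2 _ _ _ _ _ _ _ _ _ _ _ _ _ W N2) as [C|C].
    - destruct (rel_pos _ _ _ _ (rel24 _ _ _ _ _ _ _ _ _ _ _ _ _ W C) hs1) as [h2 _].
      split; [exact h2|]. eapply (posL _ _ _ _ _ _ _ _ _ _ _ _ _ W3 N6); assumption.
    - destruct (rel_pos _ _ _ _ (rel25 _ _ _ _ _ _ _ _ _ _ _ _ _ W C) hs1) as [h3 _].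
      split; [|exact h3]. eapply (posL _ _ _ _ _ _ _ _ _ _ _ _ _ W2 N4); assumption. }
  destruct hs23 as [hs2 hs3].
  pose proof (ang_pos _ T1 hs1) as a1.
  pose proof (ang_pos _ T2 hs2) as a2.
  pose proof (ang_pos _ T3 hs3) as a3.
  pose proof (cross2 _ _ _ _ _ _ _ _ _ _ _ _ _ W N2) as X2.
  pose proof (cross2 _ _ _ _ _ _ _ _ _ _ _ _ _ W2 N4) as X4.
  pose proof (cross2 _ _ _ _ _ _ _ _ _ _ _ _ _ W3 N6) as X6.
  assert (P12 : 0 < sin th1 * cos th2 + cos th1 * sin th2).
  { destruct X2 as [C|C].
    - exact (proj2 (rel_pos _ _ _ _ (rel24 _ _ _ _ _ _ _ _ _ _ _ _ _ W C) hs1)).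
    - destruct X4 as [C'|C'].
      + exact (cevian _ _ _ _ _ _ _ _ _ _ _ _ _ W3 hs3 hs1 hs2 C C').
      + pose proof (proj2 (rel_pos _ _ _ _ (rel25 _ _ _ _ _ _ _ _ _ _ _ _ _ W2 C') hs2)). lra. }
  assert (P13 : 0 < sin th1 * cos th3 + cos th1 * sin th3).
  { destruct X2 as [C|C].
    - destruct X6 as [C'|C'].
      + pose proof (proj2 (rel_pos _ _ _ _ (rel24 _ _ _ _ _ _ _ _ _ _ _ _ _ W3 C') hs3)). lra.
      + pose proof (cevian _ _ _ _ _ _ _ _ _ _ _ _ _ W2 hs2 hs3 hs1 C' C). lra.
    - exact (proj2 (rel_pos _ _ _ _ (rel25 _ _ _ _ _ _ _ _ _ _ _ _ _ W C) hs1)). }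
  assert (P23 : 0 < sin th2 * cos th3 + cos th2 * sin th3).
  { destruct X4 as [C|C].
    - exact (proj2 (rel_pos _ _ _ _ (rel24 _ _ _ _ _ _ _ _ _ _ _ _ _ W2 C) hs2)).
    - destruct X6 as [C'|C'].
      + exact (cevian _ _ _ _ _ _ _ _ _ _ _ _ _ W hs1 hs2 hs3 C C').
      + pose proof (proj2 (rel_pos _ _ _ _ (rel25 _ _ _ _ _ _ _ _ _ _ _ _ _ W3 C') hs3)). lra. }
  split; [tauto|].
  split; [apply sum_lt; assumption|]. split; apply sum_lt; assumption.
Qed.
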